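(* Under the standing setup with $\mathrm{Var}(X_N)>0$, the following bounds on $Y^0$ hold and each is sharp under its stated sign assumptions (absent additional information): (1) if $\delta_B\ge0$: $Y^0\in[Y^{0-}_{MOB},Y^0_{NM}]$; if $\delta_B\le0$: $Y^0\in[Y^0_{NM},Y^{0+}_{MOB}]$; (2) if $\delta_W\ge0$: $Y^0\in[\max\{Y^0_{ER},Y^{0-}_{MOB}\},Y^{0+}_{MOB}]$; if $\delta_W\le0$: $Y^0\in[Y^{0-}_{MOB},\min\{Y^0_{ER},Y^{0+}_{MOB}\}]$; (3) if $\delta_W\ge0$ and $\delta_B\ge0$: $\max\{Y^0_{ER},Y^{0-}_{MOB}\}\le Y^0\le Y^0_{NM}$; if $\delta_W\le0$ and $\delta_B\le0$: $Y^0_{NM}\le Y^0\le\min\{Y^0_{ER},Y^{0+}_{MOB}\}$; (4) if $\delta_W\ge0$ and $\delta_B\le0$: $Y^0\in[\max\{Y^{0-}_{MOB},Y^0_{ER},Y^0_{NM}\},Y^{0+}_{MOB}]$; if $\delta_W\le0$ and $\delta_B\ge0$: $Y^0\in[Y^{0-}_{MOB},\min\{Y^0_{NM},Y^0_{ER},Y^{0+}_{MOB}\}]$; (5) if $\delta_W=0$ then $Y^0=Y^0_{ER}$; if $\delta_B=0$ then $Y^0=Y^0_{NM}$; if $\delta_W=\delta_B=0$ then $Y^0=Y^1$.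
   Context: Let $(X,Y,N)$ be a random triple with $X\in\{0,1\}$, $Y$ real-valued, $N$ taking values in a finite set $\mathcal N$. Write $p_n=\Pr(N=n)$, $X_n=\mathbb E[X\mid N=n]$, $Y_n=\mathbb E[Y\mid N=n]$, $X_N=\mathbb E[X\mid N]$, $Y_N=\mathbb E[Y\mid N]$. Assume some $n$ has $p_n>0$ and $X_n\in(0,1)$, and fix reals $\underline Y\le\overline Y$ with $\mathbb E[Y\mid X=x,N=n]\in[\underline Y,\overline Y]$ whenever $\Pr(X=x,N=n)>0$. $Y^x=\mathbb E[Y\mid X=x]$; $\delta_B=\mathbb E[\mathrm{Cov}(Y,X\mid N)]$; $\delta_W=\mathbb E[\mathrm{Cov}(Y,X_N\mid X)]$; $D_{ER}=\mathrm{Cov}(Y_N,X_N)/\mathrm{Var}(X_N)$; $Y^0_{ER}=\mathbb E[Y_N]-D_{ER}\,\mathbb E[X_N]$; $Y^0_{NM}=\mathbb E[(1-X_N)Y_N]/\mathbb E[1-X_N]$; $Y^{0-}_{MOB}=\mathbb E[\max\{Y_N-\overline Y X_N,\underline Y(1-X_N)\}]/(1-\mathbb E[X])$; $Y^{0+}_{MOB}=\mathbb E[\min\{Y_N-\underline Y X_N,\overline Y(1-X_N)\}]/(1-\mathbb E[X])$. Sharpness under an assumption $\mathcal A$: the parameter lies in the interval for every joint distribution satisfying the standing assumptions and $\mathcal A$, and every value in the interval is attained by some joint distribution of $(X,Y,N)$ with the same observed $(p_n,X_n,Y_n)_n$, satisfying the standing bound and $\mathcal A$. *)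

(* Defs.v *)
From HB Require Import structures.
From mathcomp Require Import all_boot all_order all_algebra.
From mathcomp Require Import all_classical all_reals all_analysis.
Set Implicit Arguments. Unset Strict Implicit. Unset Printing Implicit Defensive.
Import Order.TTheory GRing.Theory Num.Theory.
Local Open Scope classical_set_scope.
Local Open Scope ring_scope.

Section Defs.
Variables (R : realType) (d : measure_display) (T : measurableType d)
  (P : probability T R) (I : finType)
  (X : T -> bool) (Y : T -> R) (N : T -> I).

Definition Nev (n : I) : set T := [set t | N t = n].
Definition Xev (x : bool) : set T := [set t | X t = x].
Definition XNev (x : bool) (n : I) : set T := [set t | X t = x /\ N t = n].

Definition Pr (A : set T) : R := fine (P A).

(* E[f | A] = E[f 1_A] / Pr(A)  (elementary conditional expectation given an
   event; equals 0 by the convention x/0 = 0 when Pr(A) = 0) *)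
Definition cexp (A : set T) (f : T -> R) : R :=
  fine (\int[P]_(t in A) (f t)%:E)%E / Pr A.

Definition Ex (f : T -> R) : R := cexp setT f.

Definition ccov (A : set T) (f g : T -> R) : R :=
  cexp A (fun t => (f t - cexp A f) * (g t - cexp A g)).

Definition Xr (t : T) : R := (X t)%:R.

Definition p_ (n : I) : R := Pr (Nev n).
Definition X_ (n : I) : R := cexp (Nev n) Xr.
Definition Y_ (n : I) : R := cexp (Nev n) Y.
Definition XN (t : T) : R := X_ (N t).
Definition YN (t : T) : R := Y_ (N t).

Definition Yx (x : bool) : R := cexp (Xev x) Y.

Definition deltaB : R := Ex (fun t => ccov (Nev (N t)) Y Xr).
Definition deltaW : R := Ex (fun t => ccov (Xev (X t)) Y XN).

Definition VarXN : R := ccov setT XN XN.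
Definition D_ER : R := ccov setT YN XN / VarXN.
Definition Y0_ER : R := Ex YN - D_ER * Ex XN.
Definition Y0_NM : R := Ex (fun t => (1 - XN t) * YN t) / Ex (fun t => 1 - XN t).
Definition Y0_MOBm (Ylo Yhi : R) : R :=
  Ex (fun t => Num.max (YN t - Yhi * XN t) (Ylo * (1 - XN t))) / (1 - Ex Xr).
Definition Y0_MOBp (Ylo Yhi : R) : R :=
  Ex (fun t => Num.min (YN t - Ylo * XN t) (Yhi * (1 - XN t))) / (1 - Ex Xr).

Definition standing (Ylo Yhi : R) : Prop :=
  [/\ (forall n, measurable (Nev n)) /\ measurable (Xev true),
      measurable_fun setT Y,
      P.-integrable setT (EFin \o Y),
      (exists n, 0 < p_ n /\ 0 < X_ n < 1)
    & forall x n, 0 < Pr (XNev x n) ->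
        Ylo <= cexp (XNev x n) Y <= Yhi].

End Defs.

Definition same_obs (R : realType) (I : finType)
  (d : measure_display) (T : measurableType d) (P : probability T R)
  (X : T -> bool) (Y : T -> R) (N : T -> I)
  (d' : measure_display) (T' : measurableType d') (P' : probability T' R)
  (X' : T' -> bool) (Y' : T' -> R) (N' : T' -> I) : Prop :=
  forall n, [/\ p_ P' N' n = p_ P N n,
               X_ P' X' N' n = X_ P X N n
             & Y_ P' Y' N' n = Y_ P Y N n].

Definition attained (R : realType) (I : finType)
  (d : measure_display) (T : measurableType d) (P : probability T R)
  (X : T -> bool) (Y : T -> R) (N : T -> I) (Ylo Yhi : R)
  (cond : R -> R -> Prop) (y : R) : Prop :=
  exists (d' : measure_display) (T' : measurableType d')
         (P' : probability T' R) (X' : T' -> bool) (Y' : T' -> R) (N' : T' -> I),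
    [/\ standing P' X' Y' N' Ylo Yhi,
        same_obs P X Y N P' X' Y' N',
        cond (deltaW P' X' Y' N') (deltaB P' X' Y' N')
      & Yx P' X' Y' false = y].

Definition sharp_bounds (R : realType) (I : finType)
  (d : measure_display) (T : measurableType d) (P : probability T R)
  (X : T -> bool) (Y : T -> R) (N : T -> I) (Ylo Yhi : R)
  (cond : R -> R -> Prop) (lo hi : R) : Prop :=
  (cond (deltaW P X Y N) (deltaB P X Y N) -> lo <= Yx P X Y false <= hi)
  /\ (forall y, lo <= y <= hi -> attained P X Y N Ylo Yhi cond y).

(* Main.v *)
Require Import Defs.
From HB Require Import structures.
From mathcomp Require Import all_boot all_order all_algebra.
From mathcomp Require Import all_classical all_reals all_analysis.
From mathcomp Require Import ring lra.
Import Order.TTheory GRing.Theory Num.Theory.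
Local Open Scope ring_scope.
Set Implicit Arguments. Unset Strict Implicit. Unset Printing Implicit Defensive.
Section Abs.
Variables (R : realFieldType) (I : finType) (q a : bool -> I -> R).

Definition pp n := q false n + q true n.
Definition XX n := q true n / pp n.
Definition YY n := (a false n + a true n) / pp n.
Definition QQ x := \sum_n q x n.
Definition AA x := \sum_n a x n.
Definition EXN := \sum_n pp n * XX n.
Definition EYN := \sum_n pp n * YY n.
Definition VV := \sum_n pp n * ((XX n - EXN) * (XX n - EXN)).
Definition CV := \sum_n pp n * ((YY n - EYN) * (XX n - EXN)).
Definition aER := EYN - CV / VV * EXN.
Definition aNM := (\sum_n pp n * ((1 - XX n) * YY n)) / (\sum_n pp n * (1 - XX n)).
Definition aMOBm (Ylo Yhi : R) :=
  (\sum_n pp n * Num.max (YY n - Yhi * XX n) (Ylo * (1 - XX n))) / (1 - QQ true).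
Definition aMOBp (Ylo Yhi : R) :=
  (\sum_n pp n * Num.min (YY n - Ylo * XX n) (Yhi * (1 - XX n))) / (1 - QQ true).
Definition aDB := \sum_n ((0 - XX n) * (a false n - YY n * q false n)
                         + (1 - XX n) * (a true n - YY n * q true n)).
Definition cX x := (\sum_n XX n * q x n) / QQ x.
Definition aDW := \sum_(x : bool) \sum_n ((XX n - cX x) * (a x n - AA x / QQ x * q x n)).
Definition aY0 := AA false / QQ false.
Definition aY1 := AA true / QQ true.

Definition BB := \sum_n pp n * (XX n * XX n).
Definition SXY := \sum_n pp n * (XX n * YY n).

Variables (Ylo Yhi : R).
Hypothesis Hq : forall x n, 0 <= q x n.
Hypothesis Ha : forall x n, Ylo * q x n <= a x n <= Yhi * q x n.
Hypothesis Hs : \sum_n (q false n + q true n) = 1.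
Hypothesis HQ0 : 0 < QQ false.
Hypothesis HQ1 : 0 < QQ true.

Lemma a0q x n : q x n = 0 -> a x n = 0.
Proof. by move=> h; have := Ha x n; rewrite h !mulr0 => /andP[h1 h2]; apply/le_anti/andP. Qed.

Lemma pp0 n : pp n = 0 -> q false n = 0 /\ q true n = 0.
Proof.
rewrite /pp => h; have h0 := Hq false n; have h1 := Hq true n.
split; apply/le_anti/andP; split => //. all: lra.
Qed.

Lemma ppge0 n : 0 <= pp n.
Proof. by rewrite /pp addr_ge0. Qed.

Lemma ppX n : pp n * XX n = q true n.
Proof.
have [h|h] := eqVneq (pp n) 0; last by rewrite /XX mulrC divfK.
by rewrite h mul0r (pp0 h).2.
Qed.

Lemma ppY n : pp n * YY n = a false n + a true n.
Proof.
have [h|h] := eqVneq (pp n) 0; last by rewrite /YY mulrC divfK.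
by have [h0 h1] := pp0 h; rewrite h mul0r (a0q h0) (a0q h1) addr0.
Qed.

Lemma sumpp : \sum_n pp n = 1. Proof. exact: Hs. Qed.

Lemma QQsum : QQ false + QQ true = 1.
Proof. by rewrite /QQ -big_split. Qed.

Lemma EXNE : EXN = QQ true.
Proof. by apply: eq_bigr => n _; rewrite ppX. Qed.

Lemma EYNE : EYN = AA false + AA true.
Proof. by rewrite /EYN (eq_bigr _ (fun n _ => ppY n)) big_split. Qed.

Lemma VVE : VV = BB - QQ true * QQ true.
Proof.
rewrite /VV EXNE.
rewrite (eq_bigr (fun n => pp n * (XX n * XX n) + (- (2 * QQ true)) * (pp n * XX n)
   + (QQ true * QQ true) * pp n)); last by move=> n _; ring.
rewrite !big_split /= -!mulr_sumr sumpp.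
rewrite (eq_bigr _ (fun n _ => ppX n)) -/(QQ true) /BB; ring.
Qed.


Lemma pp1X n : pp n * (1 - XX n) = q false n.
Proof. by rewrite mulrBr mulr1 ppX /pp addrK. Qed.

Lemma CVE : CV = SXY - QQ true * (AA false + AA true).
Proof.
rewrite /CV -EXNE -EYNE.
rewrite (eq_bigr (fun n => pp n * (XX n * YY n) + (- EXN) * (pp n * YY n)
   + (- EYN) * (pp n * XX n) + (EYN * EXN) * pp n)); last by move=> n _; ring.
rewrite !big_split /= -!mulr_sumr sumpp -/EXN -/EYN -/SXY; ring.
Qed.

Lemma NMnumE : \sum_n pp n * ((1 - XX n) * YY n) = AA false + AA true - SXY.
Proof.
rewrite -EYNE.
rewrite (eq_bigr (fun n => pp n * YY n + (-1) * (pp n * (XX n * YY n)))); last by move=> n _; ring.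
rewrite big_split /= -mulr_sumr -/EYN -/SXY; ring.
Qed.

Lemma NMdenE : \sum_n pp n * (1 - XX n) = QQ false.
Proof. by apply: eq_bigr => n _; rewrite pp1X. Qed.

Lemma Q1E : 1 - QQ true = QQ false.
Proof. by rewrite -QQsum addrK. Qed.

Lemma DBE : aDB = AA true - SXY.
Proof.
rewrite /aDB.
rewrite (eq_bigr (fun n => pp n * YY n + (-1) * (pp n * (XX n * YY n)) + (-1) * a false n)); last first.
  move=> n _.
  have e1 := ppX n; have e2 := ppY n; have e3 := pp1X n.
  have -> : a true n = pp n * YY n - a false n by rewrite e2; ring.
  rewrite -e1 -e3; ring.
rewrite !big_split /= -!mulr_sumr -/EYN -/SXY EYNE /AA; ring.
Qed.

Lemma DWterm (f g : I -> R) : \sum_n g n != 0 ->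
  \sum_n ((XX n - (\sum_n XX n * g n) / (\sum_n g n)) *
          (f n - (\sum_n f n) / (\sum_n g n) * g n)) =
  \sum_n XX n * f n - (\sum_n XX n * g n) / (\sum_n g n) * \sum_n f n.
Proof.
move=> hg.
set c := (\sum_n XX n * g n) / (\sum_n g n).
set A := \sum_n f n.
set G := \sum_n g n.
rewrite (eq_bigr (fun n => XX n * f n + (- c) * f n + (- (A / G)) * (XX n * g n) + (c * (A / G)) * g n)); last by move=> n _; ring.
rewrite !big_split /= -!mulr_sumr -/A -/G.
rewrite /c /G /A; field; exact: hg.
Qed.

Lemma DWE : aDW = SXY - BB / QQ true * AA true - (QQ true - BB) / QQ false * AA false.
Proof.
rewrite /aDW big_bool /= /cX /AA.
rewrite !DWterm -/(QQ true) -/(QQ false) ?gt_eqF //.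
have e1 : \sum_n XX n * q true n = BB.
  by apply: eq_bigr => n _; rewrite -ppX; ring.
have e0 : \sum_n XX n * q false n = QQ true - BB.
  rewrite -EXNE /EXN /BB -sumrB; apply: eq_bigr => n _; rewrite -pp1X; ring.
have e2 : \sum_n XX n * a true n + \sum_n XX n * a false n = SXY.
  rewrite -big_split /SXY; apply: eq_bigr => n _.
  by rewrite /= -mulrDr addrC -ppY; ring.
rewrite e1 e0 -/(AA true) -/(AA false) -e2; ring.
Qed.


Lemma aNME : aNM = (AA false + AA true - SXY) / QQ false.
Proof. by rewrite /aNM NMnumE NMdenE. Qed.

Lemma aERE : aER = AA false + AA true
   - (SXY - QQ true * (AA false + AA true)) / (BB - QQ true * QQ true) * QQ true.
Proof. by rewrite /aER CVE VVE EXNE EYNE. Qed.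

Lemma idB : QQ false * (aNM - aY0) = aDB.
Proof.
rewrite aNME DBE /aY0; field; exact: lt0r_neq0.
Qed.

Lemma idC : VV != 0 -> VV * (aY0 - aER) = QQ true * aDW.
Proof.
move=> hV; have hV' := hV; rewrite VVE in hV'.
rewrite aERE DWE /aY0 VVE.
have hQ0 : QQ false = 1 - QQ true by rewrite -Q1E.
rewrite hQ0; field.
by rewrite -hQ0 lt0r_neq0 // hV' lt0r_neq0.
Qed.

Lemma idD : aDW + aDB = (QQ true - BB) * (aY1 - aY0).
Proof.
rewrite DWE DBE /aY0 /aY1; field.
by rewrite !lt0r_neq0.
Qed.


Lemma ppmax n : pp n * Num.max (YY n - Yhi * XX n) (Ylo * (1 - XX n)) =
  Num.max (a false n + a true n - Yhi * q true n) (Ylo * q false n).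
Proof.
rewrite maxr_pMr ?ppge0 // mulrBr ppY mulrCA ppX mulrCA pp1X //.
Qed.

Lemma ppmin n : pp n * Num.min (YY n - Ylo * XX n) (Yhi * (1 - XX n)) =
  Num.min (a false n + a true n - Ylo * q true n) (Yhi * q false n).
Proof.
rewrite minr_pMr ?ppge0 // mulrBr ppY mulrCA ppX mulrCA pp1X //.
Qed.

Lemma aMOBmE : aMOBm Ylo Yhi =
  (\sum_n Num.max (a false n + a true n - Yhi * q true n) (Ylo * q false n)) / QQ false.
Proof. by rewrite /aMOBm Q1E; congr (_ / _); apply: eq_bigr => n _; rewrite ppmax. Qed.

Lemma aMOBpE : aMOBp Ylo Yhi =
  (\sum_n Num.min (a false n + a true n - Ylo * q true n) (Yhi * q false n)) / QQ false.
Proof. by rewrite /aMOBp Q1E; congr (_ / _); apply: eq_bigr => n _; rewrite ppmin. Qed.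

Lemma aNME2 : aNM = (\sum_n q false n * YY n) / QQ false.
Proof.
rewrite /aNM NMdenE; congr (_ / _); apply: eq_bigr => n _.
by rewrite mulrA pp1X.
Qed.

Lemma YYb n : 0 < pp n -> Ylo <= YY n <= Yhi.
Proof.
move=> hp; have := Ha false n; have := Ha true n.
move=> /andP[h1 h2] /andP[h3 h4].
rewrite /YY ler_pdivlMr // ler_pdivrMr //; apply/andP; split; rewrite /pp; lra.
Qed.

Lemma i1 n : Num.max (a false n + a true n - Yhi * q true n) (Ylo * q false n) <= a false n.
Proof.
have := Ha false n; have := Ha true n => /andP[h1 h2] /andP[h3 h4].
rewrite ge_max; apply/andP; split; lra.
Qed.

Lemma i2 n : a false n <= Num.min (a false n + a true n - Ylo * q true n) (Yhi * q false n).
Proof.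
have := Ha false n; have := Ha true n => /andP[h1 h2] /andP[h3 h4].
rewrite le_min; apply/andP; split; lra.
Qed.

Lemma i34 n : Num.max (a false n + a true n - Yhi * q true n) (Ylo * q false n) <= q false n * YY n
   <= Num.min (a false n + a true n - Ylo * q true n) (Yhi * q false n).
Proof.
have hq0 := Hq false n; have hq1 := Hq true n.
have [h|h] := eqVneq (pp n) 0.
  have [h0 h1] := pp0 h; rewrite (a0q h0) (a0q h1) h0 h1 !mulr0 !mul0r.
  by rewrite addr0 subr0 maxxx minxx lexx.
have hp : 0 < pp n by rewrite lt0r h ppge0.
have /andP[y1 y2] := YYb hp.
have e := ppY n; rewrite /pp in e.
rewrite ge_max le_min; apply/and3P; split; first (apply/andP; split); try apply/andP; try split; nra.
Qed.


Lemma abs_main : VV != 0 ->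
  [/\ aMOBm Ylo Yhi <= aY0 <= aMOBp Ylo Yhi,
      aMOBm Ylo Yhi <= aNM <= aMOBp Ylo Yhi,
      QQ false * (aNM - aY0) = aDB,
      VV * (aY0 - aER) = QQ true * aDW
    & aDW + aDB = (QQ true - BB) * (aY1 - aY0)].
Proof using Hq Ha Hs HQ0 HQ1.
move=> hV; split; [| |exact: idB|exact: idC|exact: idD].
- rewrite aMOBmE aMOBpE /aY0 /AA; have hQ : 0 < (QQ false)^-1 by rewrite invr_gt0.
  by rewrite !ler_pM2r //; apply/andP; split; apply: ler_sum => n _; [exact: i1|exact: i2].
- rewrite aMOBmE aMOBpE aNME2; have hQ : 0 < (QQ false)^-1 by rewrite invr_gt0.
  by rewrite !ler_pM2r //; apply/andP; split; apply: ler_sum => n _; have /andP[] := i34 n.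
Qed.

Hypothesis Hle : Ylo <= Yhi.

Lemma abs_sharp y : aMOBm Ylo Yhi <= y <= aMOBp Ylo Yhi ->
  exists m : bool -> I -> R,
    [/\ forall x n, Ylo <= m x n <= Yhi,
        forall n, q false n * m false n + q true n * m true n = a false n + a true n
      & (\sum_n q false n * m false n) / QQ false = y].
Proof using Hq Ha Hs HQ0 HQ1 Hle.
move=> /andP[hy1 hy2].
pose s n := a false n + a true n.
pose Mx n := Num.max (s n - Yhi * q true n) (Ylo * q false n).
pose Mn n := Num.min (s n - Ylo * q true n) (Yhi * q false n).
pose lo0 n := if 0 < q false n then Mx n / q false n else Ylo.
pose hi0 n := if 0 < q false n then Mn n / q false n else Ylo.
pose t := if aMOBm Ylo Yhi < aMOBp Ylo Yhi then
            (y - aMOBm Ylo Yhi) / (aMOBp Ylo Yhi - aMOBm Ylo Yhi) else 0.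
pose m0 n := lo0 n + t * (hi0 n - lo0 n).
pose m1 n := if 0 < q true n then (s n - q false n * m0 n) / q true n else Ylo.
have L1 n : q false n * lo0 n = Mx n.
  rewrite /lo0; case: ifP => h; first by rewrite mulrC divfK // lt0r_neq0.
  have h0 : q false n = 0 by apply/le_anti; rewrite Hq andbT leNgt h.
  have := Ha true n => /andP[_ h4].
  rewrite h0 mul0r /Mx /s (a0q h0) h0 mulr0 add0r max_r //; lra.
have L2 n : q false n * hi0 n = Mn n.
  rewrite /hi0; case: ifP => h; first by rewrite mulrC divfK // lt0r_neq0.
  have h0 : q false n = 0 by apply/le_anti; rewrite Hq andbT leNgt h.
  have := Ha true n => /andP[h3 _].
  rewrite h0 mul0r /Mn /s (a0q h0) h0 mulr0 add0r min_r //; lra.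
have Mxb n : s n - Yhi * q true n <= Mx n <= s n - Ylo * q true n.
  have := Ha false n; have := Ha true n => /andP[h1 h2] /andP[h3 h4].
  have := Hq false n; have := Hq true n => g1 g0.
  rewrite /Mx le_max lexx /= ge_max /s; apply/andP; split; nra.
have Mnb n : s n - Yhi * q true n <= Mn n <= s n - Ylo * q true n.
  have := Ha false n; have := Ha true n => /andP[h1 h2] /andP[h3 h4].
  have := Hq false n; have := Hq true n => g1 g0.
  rewrite /Mn ge_min le_min /s lexx /= andbT; apply/andP; split; nra.
have lob n : Ylo <= lo0 n <= Yhi.
  rewrite /lo0; case: ifP => h; last by rewrite lexx Hle.
  have := Ha false n; have := Ha true n => /andP[h1 h2] /andP[h3 h4].
  have := Hq false n; have := Hq true n => g1 g0.
  rewrite ler_pdivlMr // ler_pdivrMr // /Mx le_max ge_max /s lexx orbT /=.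
  apply/andP; split; nra.
have hib n : Ylo <= hi0 n <= Yhi.
  rewrite /hi0; case: ifP => h; last by rewrite lexx Hle.
  have := Ha false n; have := Ha true n => /andP[h1 h2] /andP[h3 h4].
  have := Hq false n; have := Hq true n => g1 g0.
  rewrite ler_pdivlMr // ler_pdivrMr // /Mn ge_min le_min /s lexx orbT /=.
  apply/andP; split; nra.
have tb : 0 <= t <= 1.
  case: (boolP (aMOBm Ylo Yhi < aMOBp Ylo Yhi)) => h; last by rewrite /t (negbTE h) lexx ler01.
  have hd : 0 < aMOBp Ylo Yhi - aMOBm Ylo Yhi by rewrite subr_gt0.
  have e : t * (aMOBp Ylo Yhi - aMOBm Ylo Yhi) = y - aMOBm Ylo Yhi.
    by rewrite /t h divfK // lt0r_neq0.
  have t0 : 0 <= t by rewrite /t h; apply: divr_ge0; [rewrite subr_ge0 | exact: ltW hd].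
  rewrite t0 /= -(ler_pM2r hd) mul1r e; lra.
have q0m0 n : q false n * m0 n = Mx n + t * (Mn n - Mx n).
  by rewrite /m0 mulrDr mulrCA mulrBr L1 L2.
exists (fun x => if x then m1 else m0); split.
- move=> [] n /=.
    rewrite /m1; case: ifP => h; last by rewrite lexx Hle.
    rewrite ler_pdivlMr // ler_pdivrMr // q0m0.
    have := Mxb n; have := Mnb n => /andP[h1 h2] /andP[h3 h4].
    move: tb => /andP[t0 t1].
    apply/andP; split; nra.
  have := lob n; have := hib n => /andP[h1 h2] /andP[h3 h4].
  move: tb => /andP[t0 t1].
  rewrite /m0; apply/andP; split; nra.
- move=> n /=; rewrite /m1; case: ifP => h.
    by rewrite [q true n * _]mulrC divfK ?lt0r_neq0 // addrC subrK.
  have h1 : q true n = 0 by apply/le_anti; rewrite Hq andbT leNgt h.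
  have := Ha false n => /andP[g1 g2].
  rewrite h1 mul0r addr0 q0m0 /Mx /Mn /s (a0q h1) h1 !mulr0 subr0 !addr0.
  rewrite max_l // min_l //; ring.
- rewrite (eq_bigr _ (fun n _ => q0m0 n)) big_split /= -mulr_sumr sumrB.
  have e1 : \sum_n Mx n = aMOBm Ylo Yhi * QQ false.
    by rewrite aMOBmE divfK // lt0r_neq0.
  have e2 : \sum_n Mn n = aMOBp Ylo Yhi * QQ false.
    by rewrite aMOBpE divfK // lt0r_neq0.
  rewrite e1 e2 /t; case: ifP => h.
    field; rewrite /= (lt0r_neq0 HQ0) /= lt0r_neq0 // subr_gt0 //.
  have h' : aMOBp Ylo Yhi <= aMOBm Ylo Yhi by rewrite leNgt h.
  have ee : aMOBm Ylo Yhi = y by apply/le_anti; rewrite hy1 (le_trans hy2 h').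
  rewrite -ee; field; exact: lt0r_neq0.
Qed.

End Abs.
Section M.
Variables (R : realType) (d : measure_display) (T : measurableType d)
  (P : probability T R).
Local Open Scope ereal_scope.

Lemma cell_int (C : set T) (Y : T -> R) (c e : R) :
  measurable C -> P.-integrable setT (EFin \o Y) ->
  \int[P]_(t in C) ((Y t * c + e)%R)%:E =
  ((c * fine (\int[P]_(t in C) (Y t)%:E) + e * Pr P C)%R)%:E.
Proof.
move=> mC iY.
have iYC : P.-integrable C (EFin \o Y) by apply: integrableS iY.
under eq_integral do rewrite EFinD EFinM.
rewrite integralD //; last first.
  exact: finite_measure_integrable_cst.
  exact: integrableZr.
rewrite integralZr // integral_cst // EFinD !EFinM /Pr !fineK ?fin_num_measure //; last exact: integrable_fin_num.
by rewrite muleC.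
Qed.
End M.
Section M2.
Variables (R : realType) (d : measure_display) (T : measurableType d)
  (P : probability T R).
Local Open Scope ereal_scope.
Lemma cell_integrable (C : set T) (Y : T -> R) (c e : R) :
  measurable C -> P.-integrable setT (EFin \o Y) ->
  P.-integrable C (fun t => ((Y t * c + e)%R)%:E).
Proof.
move=> mC iY.
have iYC : P.-integrable C (EFin \o Y) by apply: integrableS iY.
have h : P.-integrable C (((EFin \o Y) \* cst c%:E) \+ (EFin \o cst e)).
  apply: integrableD => //; first exact: integrableZr.
  exact: finite_measure_integrable_cst.
apply: eq_integrable h => // t _ /=; by rewrite EFinD EFinM.
Qed.
Lemma M0 (I : finType) (X : T -> bool) (N : T -> I) (Y : T -> R) :
  (forall x n, measurable (XNev X N x n)) -> P.-integrable setT (EFin \o Y) ->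
  forall g k : bool -> I -> R,
  \int[P]_t ((Y t * g (X t) (N t) + k (X t) (N t))%R)%:E =
  ((\sum_(x : bool) \sum_(n : I)
     (g x n * fine (\int[P]_(t in XNev X N x n) (Y t)%:E)
      + k x n * Pr P (XNev X N x n)))%R)%:E.
Proof.
move=> mC iY g k.
rewrite (eq_integral (fun t => \sum_(x : bool) \sum_(n : I)
   (((fun t => ((Y t * g x n + k x n)%R)%:E) \_ (XNev X N x n)) t))); last first.
  move=> t _.
  rewrite (bigD1 (X t)) //= (bigD1 (N t)) //= patchE ifT; last by rewrite inE.
  rewrite big1 ?adde0; last first.
    move=> n /negbTE nN; rewrite patchE ifF //.
    by apply/negbTE; rewrite notin_setE /XNev /= => -[_ Nn]; move: nN; rewrite Nn eqxx.
  rewrite big1 ?adde0 //.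
  move=> x /negbTE xX; rewrite big1 // => n _; rewrite patchE ifF //.
  by apply/negbTE; rewrite notin_setE /XNev /= => -[Xx _]; move: xX; rewrite Xx eqxx.
rewrite integral_sum; last first.
  move=> x; apply: (@integrable_sum _ _ _ _ _ measurableT) => n _.
  by apply/(integrable_mkcond _ (mC x n)).1; apply: cell_integrable.
  by []. rewrite -sumEFin; apply: eq_bigr => x _.
rewrite integral_sum; last first.
  by move=> n; apply/(integrable_mkcond _ (mC x n)).1; apply: cell_integrable.
  by []. rewrite -sumEFin; apply: eq_bigr => n _.
rewrite -integral_mkcond cell_int //.
Qed.

Lemma M1 (I : finType) (X : T -> bool) (N : T -> I) (Y : T -> R)
  (A : set T) (ind : bool -> I -> bool) (f : T -> R) (g k : bool -> I -> R) :
  (forall x n, measurable (XNev X N x n)) -> P.-integrable setT (EFin \o Y) ->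
  (forall t, A t <-> ind (X t) (N t)) ->
  (forall t, f t = (Y t * g (X t) (N t) + k (X t) (N t))%R) ->
  \int[P]_(t in A) (f t)%:E =
  ((\sum_(x : bool) \sum_(n : I)
     (if ind x n then g x n * fine (\int[P]_(t in XNev X N x n) (Y t)%:E)
      + k x n * Pr P (XNev X N x n) else 0))%R)%:E.
Proof.
move=> mC iY hA hf.
rewrite integral_mkcond.
rewrite (eq_integral (fun t => ((Y t * (fun x n => if ind x n then g x n else 0%R) (X t) (N t)
   + (fun x n => if ind x n then k x n else 0%R) (X t) (N t))%R)%:E)); last first.
  move=> t _; rewrite patchE /=.
  case: ifPn => [/set_mem/hA -> | /negP tA]; first by rewrite hf.
  have -> : ind (X t) (N t) = false.
    by apply/negP => h; apply: tA; apply/mem_set/hA.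
  by rewrite mulr0 addr0.
rewrite (M0 mC iY (fun x n => if ind x n then g x n else 0%R) (fun x n => if ind x n then k x n else 0%R)); congr (_%:E); apply: eq_bigr => x _; apply: eq_bigr => n _.
by case: (ind x n) => //; rewrite mul0r mul0r addr0.
Qed.

Lemma cexpE (I : finType) (X : T -> bool) (N : T -> I) (Y : T -> R)
  (A : set T) (ind : bool -> I -> bool) (f : T -> R) (g k : bool -> I -> R) :
  (forall x n, measurable (XNev X N x n)) -> P.-integrable setT (EFin \o Y) ->
  measurable A ->
  (forall t, A t <-> ind (X t) (N t)) ->
  (forall t, f t = (Y t * g (X t) (N t) + k (X t) (N t))%R) ->
  cexp P A f =
  ((\sum_(x : bool) \sum_(n : I)
     (if ind x n then g x n * fine (\int[P]_(t in XNev X N x n) (Y t)%:E)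
      + k x n * Pr P (XNev X N x n) else 0)) /
   (\sum_(x : bool) \sum_(n : I) (if ind x n then Pr P (XNev X N x n) else 0)))%R.
Proof.
move=> mC iY mA hA hf.
rewrite /cexp (M1 mC iY hA hf) //=; congr (_ / _)%R.
have -> : Pr P A = fine (\int[P]_(t in A) ((fun _ : T => 1%R) t)%:E).
  by rewrite /Pr -[in LHS](mul1e (P A)) -(integral_cst P mA).
rewrite (M1 (g := fun _ _ => 0%R) (k := fun _ _ => 1%R) mC iY hA) //=.
  congr (_ : R); apply: eq_bigr => x _; apply: eq_bigr => n _.
  by case: ifP => //; rewrite mul0r mul1r add0r.
by move=> t; rewrite mulr0 add0r.
Qed.
End M2.
Lemma sumT (R : realType) (I : finType) (F : bool -> I -> R) :
  \sum_(x : bool) \sum_(n : I) F x n = \sum_n (F false n + F true n).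
Proof. by rewrite big_bool /= addrC -big_split. Qed.

Lemma sumX (R : realType) (I : finType) (x0 : bool) (F : bool -> I -> R) :
  \sum_(x : bool) \sum_(n : I) (if x == x0 then F x n else 0) = \sum_n F x0 n.
Proof.
rewrite big_bool /=; case: x0 => /=.
  by rewrite [X in _ + X]big1 ?addr0.
by rewrite big1 ?add0r.
Qed.

Lemma sumN (R : realType) (I : finType) (n0 : I) (F : bool -> I -> R) :
  \sum_(x : bool) \sum_(n : I) (if n == n0 then F x n else 0) = F false n0 + F true n0.
Proof. by rewrite big_bool /= -!big_mkcond !big_pred1_eq addrC. Qed.

Section Glue.
Variables (R : realType) (d : measure_display) (T : measurableType d)
  (P : probability T R) (I : finType) (X : T -> bool) (N : T -> I).
Hypothesis mN : forall n, measurable (Nev N n).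
Hypothesis mX : measurable (Xev X true).

Lemma mXev x : measurable (Xev X x).
Proof.
case: x => //.
have -> : Xev X false = (~` Xev X true)%classic.
  by apply/seteqP; split => t /=; rewrite /Xev /=; case: (X t).
exact: measurableC.
Qed.

Lemma mC x n : measurable (XNev X N x n).
Proof.
have -> : XNev X N x n = (Xev X x `&` Nev N n)%classic by [].
exact: measurableI (mXev x) (mN n).
Qed.

Definition qd x n := Pr P (XNev X N x n).
Definition ad (Y : T -> R) x n := fine (\int[P]_(t in XNev X N x n) (Y t)%:E)%E.

Lemma iY0 : P.-integrable setT (EFin \o (fun _ : T => 0 : R)).
Proof. exact: finite_measure_integrable_cst. Qed.

Lemma PrE (A : set T) (ind : bool -> I -> bool) :
  measurable A -> (forall t, A t <-> ind (X t) (N t)) ->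
  Pr P A = \sum_(x : bool) \sum_(n : I) (if ind x n then qd x n else 0).
Proof.
move=> mA hA.
have -> : Pr P A = fine (\int[P]_(t in A) ((fun _ : T => 1%R) t)%:E)%E.
  by rewrite /Pr -[in LHS](mul1e (P A)) -(integral_cst P mA).
rewrite (M1 (g := fun _ _ => 0%R) (k := fun _ _ => 1%R) mC iY0 hA) //=.
  apply: eq_bigr => x _; apply: eq_bigr => n _.
  by case: ifP => //; rewrite mul0r mul1r add0r.
by move=> t; rewrite mulr0 add0r.
Qed.

Lemma hNev n t : Nev N n t <-> (N t == n).
Proof. by rewrite /Nev /=; split => [->|/eqP]. Qed.
Lemma hXev x t : Xev X x t <-> (X t == x).
Proof. by rewrite /Xev /=; split => [->|/eqP]. Qed.
Lemma hT t : (@setT T) t <-> true. Proof. by []. Qed.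

Lemma PrT : Pr P (@setT T) = 1.
Proof. by rewrite /Pr probability_setT. Qed.

Lemma pE n : p_ P N n = pp qd n.
Proof. by rewrite /p_ (@PrE _ (fun _ n' => n' == n) (mN n) (hNev n)) sumN. Qed.

Lemma XE n : X_ P X N n = XX qd n.
Proof.
rewrite /X_ (cexpE (ind := fun _ n' => n' == n) (g := fun _ _ => 0) (k := fun x _ => (x : nat)%:R) mC iY0 (mN n) (hNev n)).
  by rewrite !sumN /XX /pp /= !mul0r !add0r mul1r.
by move=> t; rewrite mulr0 add0r.
Qed.


Lemma qd_ge0 x n : 0 <= qd x n.
Proof. by rewrite /qd /Pr fine_ge0 // measure_ge0. Qed.

Lemma Hs : \sum_n (qd false n + qd true n) = 1.
Proof. by rewrite -sumT -PrT (@PrE _ (fun _ _ => true) measurableT hT). Qed.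

Lemma ExC (f : T -> R) (k : bool -> I -> R) :
  (forall t, f t = k (X t) (N t)) ->
  Ex P f = \sum_n (k false n * qd false n + k true n * qd true n).
Proof.
move=> hf.
rewrite /Ex (cexpE (ind := fun _ _ => true) (g := fun _ _ => 0) (k := k) mC iY0 measurableT hT).
  rewrite /= !sumT Hs divr1; apply: eq_bigr => n _; rewrite !mul0r !add0r //.
by move=> t; rewrite mulr0 add0r.
Qed.

Lemma cexpT (f : T -> R) (k : bool -> I -> R) :
  (forall t, f t = k (X t) (N t)) ->
  cexp P setT f = \sum_n (k false n * qd false n + k true n * qd true n).
Proof. exact: ExC. Qed.

Lemma ExXr : Ex P (Xr R X) = QQ qd true.
Proof.
rewrite (@ExC _ (fun x _ => (x : nat)%:R)) //= /QQ.
by apply: eq_bigr => n _; rewrite mul0r add0r mul1r.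
Qed.

Lemma XNE t : XN P X N t = XX qd (N t).
Proof. by rewrite /XN XE. Qed.

Lemma ExXN : Ex P (XN P X N) = EXN qd.
Proof.
rewrite (@ExC _ (fun _ n => XX qd n)); last exact: XNE.
by apply: eq_bigr => n _; rewrite /pp; ring.
Qed.

Lemma VarE : VarXN P X N = VV qd.
Proof.
rewrite /VarXN /ccov.
have -> : cexp P setT (XN P X N) = EXN qd by exact: ExXN.
rewrite (@cexpT _ (fun _ n => (XX qd n - EXN qd) * (XX qd n - EXN qd))); last first.
  by move=> t; rewrite XNE.
by apply: eq_bigr => n _; rewrite /pp; ring.
Qed.

Section WithY.
Variable Y : T -> R.
Hypothesis iY : P.-integrable setT (EFin \o Y).

Lemma ad0 x n : qd x n = 0 -> ad Y x n = 0.
Proof.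
rewrite /qd /ad /Pr => h.
have h0 : P (XNev X N x n) = 0%E.
  have := fin_num_measure P (XNev X N x n) (mC x n).
  by move/fineK => <-; rewrite h.
rewrite null_set_integral //; first exact: mC.
exact: (measurable_funS measurableT (subsetT _) (measurable_int _ iY)).
Qed.

Lemma YE n : Y_ P Y N n = YY qd (ad Y) n.
Proof.
rewrite /Y_ (cexpE (ind := fun _ n' => n' == n) (g := fun _ _ => 1) (k := fun _ _ => 0) mC iY (mN n) (hNev n)).
  by rewrite !sumN /YY /pp /ad /qd !mul1r !mul0r !addr0.
by move=> t; rewrite mulr1 addr0.
Qed.

Lemma YxE x : Yx P X Y x = AA (ad Y) x / QQ qd x.
Proof.
rewrite /Yx (cexpE (ind := fun x' _ => x' == x) (g := fun _ _ => 1) (k := fun _ _ => 0) mC iY (mXev x) (hXev x)).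
  rewrite !sumX /AA /QQ; congr (_ / _); apply: eq_bigr => n _.
  by rewrite mul1r mul0r addr0.
by move=> t; rewrite mulr1 addr0.
Qed.

Lemma YNE t : YN P Y N t = YY qd (ad Y) (N t).
Proof. by rewrite /YN YE. Qed.

Lemma ExYN : Ex P (YN P Y N) = EYN qd (ad Y).
Proof.
rewrite (@ExC _ (fun _ n => YY qd (ad Y) n)); last exact: YNE.
by apply: eq_bigr => n _; rewrite /pp; ring.
Qed.

Lemma CovE : ccov P setT (YN P Y N) (XN P X N) = CV qd (ad Y).
Proof.
rewrite /ccov.
have -> : cexp P setT (XN P X N) = EXN qd by exact: ExXN.
have -> : cexp P setT (YN P Y N) = EYN qd (ad Y) by exact: ExYN.
rewrite (@cexpT _ (fun _ n => (YY qd (ad Y) n - EYN qd (ad Y)) * (XX qd n - EXN qd))); last first.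
  by move=> t; rewrite XNE YNE.
by apply: eq_bigr => n _; rewrite /pp; ring.
Qed.

Lemma EREq : Y0_ER P X Y N = aER qd (ad Y).
Proof.
by rewrite /Y0_ER /D_ER CovE VarE ExXN ExYN /aER.
Qed.

Lemma NMEq : Y0_NM P X Y N = aNM qd (ad Y).
Proof.
rewrite /Y0_NM /aNM.
rewrite (@ExC _ (fun _ n => (1 - XX qd n) * YY qd (ad Y) n)); last by move=> t; rewrite XNE YNE.
rewrite (@ExC _ (fun _ n => (1 - XX qd n))); last by move=> t; rewrite XNE.
by congr (_ / _); apply: eq_bigr => n _; rewrite /pp; ring.
Qed.

Lemma MOBmEq Ylo Yhi : Y0_MOBm P X Y N Ylo Yhi = aMOBm qd (ad Y) Ylo Yhi.
Proof.
rewrite /Y0_MOBm /aMOBm ExXr.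
rewrite (@ExC _ (fun _ n => Num.max (YY qd (ad Y) n - Yhi * XX qd n) (Ylo * (1 - XX qd n)))); last by move=> t; rewrite XNE YNE.
by congr (_ / _); apply: eq_bigr => n _; rewrite /pp; ring.
Qed.

Lemma MOBpEq Ylo Yhi : Y0_MOBp P X Y N Ylo Yhi = aMOBp qd (ad Y) Ylo Yhi.
Proof.
rewrite /Y0_MOBp /aMOBp ExXr.
rewrite (@ExC _ (fun _ n => Num.min (YY qd (ad Y) n - Ylo * XX qd n) (Yhi * (1 - XX qd n)))); last by move=> t; rewrite XNE YNE.
by congr (_ / _); apply: eq_bigr => n _; rewrite /pp; ring.
Qed.

Lemma cBpp n : ccov P (Nev N n) Y (Xr R X) * pp qd n =
  (0 - XX qd n) * (ad Y false n - YY qd (ad Y) n * qd false n)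
  + (1 - XX qd n) * (ad Y true n - YY qd (ad Y) n * qd true n).
Proof.
rewrite /ccov.
have -> : cexp P (Nev N n) Y = YY qd (ad Y) n by exact: YE.
have -> : cexp P (Nev N n) (Xr R X) = XX qd n by exact: XE.
rewrite (cexpE (ind := fun _ n' => n' == n) (g := fun x _ => (x : nat)%:R - XX qd n)
   (k := fun x _ => - YY qd (ad Y) n * ((x : nat)%:R - XX qd n)) mC iY (mN n) (hNev n)); last first.
  by move=> t; rewrite /Xr; ring.
rewrite !sumN /= -/(pp qd n) -/(qd false n) -/(qd true n) -/(ad Y false n) -/(ad Y true n).
have [h|h] := eqVneq (pp qd n) 0; last by rewrite divfK //; ring.
have [h0 h1] : qd false n = 0 /\ qd true n = 0.
  by move: h; rewrite /pp; have := qd_ge0 false n; have := qd_ge0 true n; split; apply/le_anti/andP; split => //; lra.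
rewrite h mulr0 (ad0 h0) (ad0 h1) h0 h1; ring.
Qed.

Lemma DBEq : deltaB P X Y N = aDB qd (ad Y).
Proof.
rewrite /deltaB (@ExC _ (fun _ n => ccov P (Nev N n) Y (Xr R X))) // /aDB.
by apply: eq_bigr => n _; rewrite -cBpp /pp; ring.
Qed.

Lemma cXE x : cexp P (Xev X x) (XN P X N) = cX qd x.
Proof.
rewrite (cexpE (ind := fun x' _ => x' == x) (g := fun _ _ => 0) (k := fun _ n => XX qd n) mC iY0 (mXev x) (hXev x)); last first.
  by move=> t; rewrite XNE; ring.
rewrite !sumX /cX /QQ; congr (_ / _); apply: eq_bigr => n _; by rewrite mul0r add0r.
Qed.

Lemma wQQ x : QQ qd x != 0 ->
  ccov P (Xev X x) Y (XN P X N) * QQ qd x =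
  \sum_n ((XX qd n - cX qd x) * (ad Y x n - AA (ad Y) x / QQ qd x * qd x n)).
Proof.
move=> hQ; rewrite /ccov cXE.
have -> : cexp P (Xev X x) Y = AA (ad Y) x / QQ qd x by exact: YxE.
rewrite (cexpE (ind := fun x' _ => x' == x) (g := fun _ n => XX qd n - cX qd x)
   (k := fun _ n => - (AA (ad Y) x / QQ qd x) * (XX qd n - cX qd x)) mC iY (mXev x) (hXev x)); last first.
  by move=> t; rewrite XNE; ring.
rewrite !sumX -/(QQ qd x) divfK //; apply: eq_bigr => n _; rewrite /ad /qd; ring.
Qed.

Lemma DWEq : QQ qd false != 0 -> QQ qd true != 0 -> deltaW P X Y N = aDW qd (ad Y).
Proof.
move=> h0 h1.
rewrite /deltaW (@ExC _ (fun x _ => ccov P (Xev X x) Y (XN P X N))) // /aDW big_bool /=.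
rewrite -(wQQ h0) -(wQQ h1) /QQ !mulr_sumr -big_split /=.
by apply: eq_bigr => n _; rewrite addrC.
Qed.

End WithY.


Definition Ycell (m : bool -> I -> R) (t : T) : R :=
  \sum_(x : bool) \sum_(n : I) (m x n * \1_(XNev X N x n) t).

Lemma Ycell_pt m t : Ycell m t = m (X t) (N t).
Proof.
rewrite /Ycell (bigD1 (X t)) //= (bigD1 (N t)) //= indicE mem_set; last by [].
rewrite mulr1 big1 ?addr0; last first.
  move=> n /negbTE nN; rewrite indicE memNset ?mulr0 //.
  by rewrite /XNev /= => -[_ Nn]; move: nN; rewrite Nn eqxx.
rewrite big1 ?addr0 // => x /negbTE xX; rewrite big1 // => n _.
rewrite indicE memNset ?mulr0 //.
by rewrite /XNev /= => -[Xx _]; move: xX; rewrite Xx eqxx.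
Qed.

Lemma Ycell_meas m : measurable_fun setT (Ycell m).
Proof.
apply: measurable_sum => x; apply: measurable_sum => n.
apply: measurable_realfun.measurable_funM; first exact: measurable_cst.
exact: measurable_realfun.measurable_indic (mC x n).
Qed.

Lemma Ycell_int m : P.-integrable setT (EFin \o Ycell m).
Proof.
have h : P.-integrable setT (fun t => \sum_(x : bool) \sum_(n : I)
    ((m x n)%:E * (\1_(XNev X N x n) t)%:E))%E.
  apply: (@integrable_sum _ _ _ _ _ measurableT) => x _.
  apply: (@integrable_sum _ _ _ _ _ measurableT) => n _.
  apply: integrableZl => //; exact: integrable_indic (mC x n).
apply: eq_integrable h => // t _ /=.
by rewrite /Ycell -sumEFin; apply: eq_bigr => x _; rewrite -sumEFin; apply: eq_bigr.
Qed.

Lemma hXNev x n t : XNev X N x n t <-> ((X t == x) && (N t == n)).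
Proof. by rewrite /XNev /=; split => [[-> ->]|/andP[/eqP -> /eqP ->]]; rewrite ?eqxx. Qed.

Lemma Ycell_ad m x n : ad (Ycell m) x n = qd x n * m x n.
Proof.
rewrite /ad (M1 (ind := fun x' n' => (x' == x) && (n' == n)) (g := fun _ _ => 0) (k := m) mC iY0 (hXNev x n)); last first.
  by move=> t; rewrite Ycell_pt mulr0 add0r.
rewrite /= (bigD1 x) //= (bigD1 n) //= !eqxx /=.
rewrite big1 ?addr0; last by move=> n' /negbTE ->; rewrite ?andbF.
rewrite big1 ?addr0; last by move=> x' /negbTE ->; rewrite big1.
by rewrite mul0r add0r mulrC.
Qed.

Lemma Ycell_cexp m x n : 0 < qd x n -> cexp P (XNev X N x n) (Ycell m) = m x n.
Proof.
move=> h; rewrite /cexp -/(ad (Ycell m) x n) -/(qd x n) Ycell_ad.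
by rewrite mulrAC divff ?mul1r // lt0r_neq0.
Qed.

End Glue.

Section Extra.
Variables (R : realType) (I : finType) (q : bool -> I -> R).

Lemma XXle1 n : (forall x n, 0 <= q x n) -> 0 <= XX q n <= 1.
Proof.
move=> Hq; rewrite /XX /pp.
have h0 := Hq false n; have h1 := Hq true n.
have [h|h] := eqVneq (q false n + q true n) 0; first by rewrite h invr0 mulr0 lexx ler01.
have hp : 0 < q false n + q true n by rewrite lt0r h addr_ge0.
by rewrite divr_ge0 ?addr_ge0 //= ler_pdivrMr // mul1r; lra.
Qed.

Lemma Hpos n0 : (forall x n, 0 <= q x n) -> 0 < q false n0 -> 0 < q true n0 ->
  0 < QQ q true - BB q.
Proof.
move=> Hq h0 h1.
have e : QQ q true - BB q = \sum_n (q true n * (1 - XX q n)).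
  rewrite /QQ /BB -sumrB; apply: eq_bigr => n _.
  rewrite mulrA (mulrC (pp q n)) -mulrA.
  have -> : pp q n * XX q n = q true n.
    have [h|h] := eqVneq (pp q n) 0; last by rewrite /XX mulrC divfK.
    rewrite h mul0r; move: h; rewrite /pp; have := Hq false n; have := Hq true n.
    by move=> g1 g0 h; apply/le_anti/andP; split => //; lra.
  ring.
rewrite e (bigD1 n0) //=.
have hs : 0 <= \sum_(i | i != n0) q true i * (1 - XX q i).
  apply: sumr_ge0 => i _; apply: mulr_ge0 => //.
  by have /andP[_ ?] := XXle1 i Hq; rewrite subr_ge0.
have hx : XX q n0 < 1.
  by rewrite /XX /pp ltr_pdivrMr ?addr_gt0 // mul1r ltrDr.
have : 0 < q true n0 * (1 - XX q n0) by rewrite mulr_gt0 // subr_gt0.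
lra.
Qed.

Lemma obsYY (a a' : bool -> I -> R) :
  (forall n, a' false n + a' true n = a false n + a true n) -> YY q a' = YY q a.
Proof. by move=> h; apply/funext => n; rewrite /YY h. Qed.

Lemma obs_all (a a' : bool -> I -> R) Ylo Yhi :
  (forall n, a' false n + a' true n = a false n + a true n) ->
  [/\ aNM q a' = aNM q a, aER q a' = aER q a,
      aMOBm q a' Ylo Yhi = aMOBm q a Ylo Yhi & aMOBp q a' Ylo Yhi = aMOBp q a Ylo Yhi].
Proof.
move=> h; have e := obsYY h.
by rewrite /aNM /aER /CV /VV /aMOBm /aMOBp /EYN /EXN e.
Qed.

End Extra.

Unset Implicit Arguments.

Theorem theorem3 (R : realType) (I : finType)
  (d : measure_display) (T : measurableType d) (P : probability T R)
  (X : T -> bool) (Y : T -> R) (N : T -> I) (Ylo Yhi : R) :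
  Ylo <= Yhi ->
  standing P X Y N Ylo Yhi ->
  0 < VarXN P X N ->
  let dW := deltaW P X Y N in
  let dB := deltaB P X Y N in
  let Y0 := Yx P X Y false in
  let Y1 := Yx P X Y true in
  let ER := Y0_ER P X Y N in
  let NM := Y0_NM P X Y N in
  let MOBm := Y0_MOBm P X Y N Ylo Yhi in
  let MOBp := Y0_MOBp P X Y N Ylo Yhi in
  let SB := sharp_bounds P X Y N Ylo Yhi in
  [/\ (* (1) *)
      SB (fun _ b => 0 <= b) MOBm NM /\ SB (fun _ b => b <= 0) NM MOBp,
      (* (2) *)
      SB (fun w _ => 0 <= w) (Num.max ER MOBm) MOBp /\
      SB (fun w _ => w <= 0) MOBm (Num.min ER MOBp),
      (* (3) *)
      SB (fun w b => 0 <= w /\ 0 <= b) (Num.max ER MOBm) NM /\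
      SB (fun w b => w <= 0 /\ b <= 0) NM (Num.min ER MOBp),
      (* (4) *)
      SB (fun w b => 0 <= w /\ b <= 0) (Num.max MOBm (Num.max ER NM)) MOBp /\
      SB (fun w b => w <= 0 /\ 0 <= b) MOBm (Num.min NM (Num.min ER MOBp))
    & (* (5) *)
      [/\ dW = 0 -> Y0 = ER,
          dB = 0 -> Y0 = NM
        & dW = 0 -> dB = 0 -> Y0 = Y1]].
Proof.
move=> hle hst hV.
have hst' := hst.
case: hst => [[mN mX] mY iY hex hcell].
pose q := qd P X N. pose a := ad P X N Y.
have Hq : forall x n, 0 <= q x n by move=> x n; exact: qd_ge0.
have Ha : forall x n, Ylo * q x n <= a x n <= Yhi * q x n.
  move=> x n; have [h|h] := ltrP 0 (q x n).
    have := hcell x n h.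
    change (Ylo <= a x n / q x n <= Yhi -> Ylo * q x n <= a x n <= Yhi * q x n).
    by rewrite ler_pdivlMr // ler_pdivrMr.
  have h0 : q x n = 0 by apply/le_anti; rewrite h Hq.
  by rewrite h0 /a (ad0 mN mX iY h0) !mulr0 lexx.
have Hs' : \sum_n (q false n + q true n) = 1 by exact: Hs.
case: hex => n0 [hp0 /andP[hx0 hx1]].
rewrite (pE P mN mX) in hp0.
rewrite (XE P mN mX) in hx0 hx1.
have q1p : 0 < q true n0.
  by move: hx0; rewrite /XX pmulr_lgt0 // invr_gt0.
have q0p : 0 < q false n0.
  move: hx1; rewrite /XX ltr_pdivrMr // mul1r /pp -/q; lra.
have HQ x n : 0 < q x n -> 0 < QQ q x.
  move=> h; rewrite /QQ (bigD1 n) //=.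
  have : 0 <= \sum_(i | i != n) q x i by apply: sumr_ge0 => i _; exact: Hq.
  lra.
have HQ0 := HQ false n0 q0p. have HQ1 := HQ true n0 q1p.
have hVV : VV q != 0 by rewrite -(VarE P mN mX) lt0r_neq0.
have [B1 B2 eb ec ed] := abs_main Hq Ha Hs' HQ0 HQ1 hVV.
have hH := Hpos Hq q0p q1p.
have edW : deltaW P X Y N = aDW q a by exact: (DWEq mN mX iY (lt0r_neq0 HQ0) (lt0r_neq0 HQ1)).
have edB : deltaB P X Y N = aDB q a by exact: (DBEq mN mX iY).
have eY0 : Yx P X Y false = aY0 q a by exact: (YxE mN mX iY).
have eY1 : Yx P X Y true = aY1 q a by exact: (YxE mN mX iY).
have eER : Y0_ER P X Y N = aER q a by exact: (EREq mN mX iY).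
have eNM : Y0_NM P X Y N = aNM q a by exact: (NMEq mN mX iY).
have eMm : Y0_MOBm P X Y N Ylo Yhi = aMOBm q a Ylo Yhi by exact: (MOBmEq mN mX iY).
have eMp : Y0_MOBp P X Y N Ylo Yhi = aMOBp q a Ylo Yhi by exact: (MOBpEq mN mX iY).
have VVp : 0 < VV q by rewrite -(VarE P mN mX).
have attain : forall y, aMOBm q a Ylo Yhi <= y <= aMOBp q a Ylo Yhi ->
  exists Y' : T -> R, [/\ standing P X Y' N Ylo Yhi, same_obs P X Y N P X Y' N,
     deltaW P X Y' N = VV q / QQ q true * (y - aER q a),
     deltaB P X Y' N = QQ q false * (aNM q a - y) & Yx P X Y' false = y].
  move=> y hy.
  have [m [mb msum my]] := abs_sharp Hq Ha Hs' HQ0 HQ1 hle hy.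
  pose Y' := Ycell X N m.
  pose a' := ad P X N Y'.
  have ea' : forall x n, a' x n = q x n * m x n by move=> x n; exact: (Ycell_ad P mN mX).
  have iY' : P.-integrable setT (EFin \o Y') by exact: (Ycell_int P mN mX).
  have Ha' : forall x n, Ylo * q x n <= a' x n <= Yhi * q x n.
    move=> x n; rewrite ea'; have := mb x n => /andP[h1 h2]; have := Hq x n => h3.
    apply/andP; split; nra.
  have hsum' : forall n, a' false n + a' true n = a false n + a true n.
    by move=> n; rewrite !ea' msum.
  have [eNM' eER' _ _] := obs_all q Ylo Yhi hsum'.
  have [_ _ eb' ec' _] := abs_main Hq Ha' Hs' HQ0 HQ1 hVV.
  have eY0' : aY0 q a' = y.
    by rewrite /aY0 /AA -my; congr (_ / _); apply: eq_bigr => n _; rewrite ea'.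
  exists Y'; split.
  - case: hst' => [h1 _ _ h4 _]; split => //.
    + exact: (Ycell_meas mN mX).
    + by move=> x n hq; rewrite (Ycell_cexp mN mX) //; exact: mb.
  - move=> n; split => //.
    rewrite (YE mN mX iY) (YE mN mX iY').
    by rewrite (obsYY q hsum').
  - rewrite (DWEq mN mX iY' (lt0r_neq0 HQ0) (lt0r_neq0 HQ1)).
    rewrite -eER' -eY0'; apply: (mulfI (lt0r_neq0 HQ1)); rewrite -ec'; field.
    exact: lt0r_neq0.
  - by rewrite (DBEq mN mX iY') -eb' eNM' eY0'.
  - by rewrite (YxE mN mX iY') -/(aY0 q a') eY0'.
have att : forall (cond : R -> R -> Prop) y,
    aMOBm q a Ylo Yhi <= y <= aMOBp q a Ylo Yhi ->
    cond (VV q / QQ q true * (y - aER q a)) (QQ q false * (aNM q a - y)) ->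
    attained P X Y N Ylo Yhi cond y.
  move=> cond y hy hc; have [Y' [s o w b e]] := attain y hy.
  by exists d, T, P, X, Y', N; split => //; rewrite w b.
have c1p : 0 < VV q / QQ q true by rewrite divr_gt0.
have hW : aDW q a = VV q / QQ q true * (aY0 q a - aER q a).
  apply: (mulfI (lt0r_neq0 HQ1)); rewrite -ec; field; exact: lt0r_neq0.
have hB : aDB q a = QQ q false * (aNM q a - aY0 q a) by rewrite eb.
move=> dW dB Y0 Y1 ER NM MOBm MOBp SB.
rewrite /dW /dB /Y0 /Y1 /ER /NM /MOBm /MOBp /SB /sharp_bounds.
rewrite edW edB eY0 eY1 eER eNM eMm eMp hW hB.
move: B1 B2 => /andP[B1a B1b] /andP[B2a B2b].
set c1 := VV q / QQ q true in c1p hW att *.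
set Q0 := QQ q false in HQ0 hB att *.
set y0 := aY0 q a in B1a B1b hW hB ed *.
set er := aER q a in hW att *.
set nm := aNM q a in B2a B2b hB att *.
set mm := aMOBm q a Ylo Yhi in B1a B2a att *.
set mp := aMOBp q a Ylo Yhi in B1b B2b att *.
have s1 : forall z, (0 <= c1 * z) = (0 <= z) by move=> z; rewrite pmulr_rge0.
have s2 : forall z, (c1 * z <= 0) = (z <= 0) by move=> z; rewrite pmulr_rle0.
have s3 : forall z, (0 <= Q0 * z) = (0 <= z) by move=> z; rewrite pmulr_rge0.
have s4 : forall z, (Q0 * z <= 0) = (z <= 0) by move=> z; rewrite pmulr_rle0.
have z1 : forall z, (c1 * z = 0) -> z = 0.
  by move=> z /eqP; rewrite mulf_eq0 (negbTE (lt0r_neq0 c1p)) => /eqP.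
have z2 : forall z, (Q0 * z = 0) -> z = 0.
  by move=> z /eqP; rewrite mulf_eq0 (negbTE (lt0r_neq0 HQ0)) => /eqP.
rewrite ?s1 ?s2 ?s3 ?s4.
have ed' := ed; rewrite hW hB in ed'.
split; [split; split|split; split|split; split|split; split|split].
all: try (move=> y; rewrite ?ge_max ?le_min => hy; apply: att; [|rewrite /= ?s1 ?s2 ?s3 ?s4];
  repeat match goal with H : is_true (_ && _) |- _ => case/andP: H => ? ? end;
  repeat (apply/andP; split); repeat split; lra).
all: try (move=> H; repeat match goal with H : _ /\ _ |- _ => case: H => ? ? end;
  rewrite ?ge_max ?le_min; repeat (apply/andP; split); lra).
- by move=> /z1 /eqP; rewrite subr_eq0 => /eqP.
- by move=> /z2 /eqP; rewrite subr_eq0 => /eqP ->.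
- move=> h1 h2; rewrite h1 h2 addr0 in ed'.
  move/esym/eqP: ed'; rewrite mulf_eq0 (negbTE (lt0r_neq0 hH)) /= subr_eq0.
  by move=> /eqP ->.
Qed.
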